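(* Let $\gamma$ be a unit speed line of curvature ($\tau_g\equiv 0$) on a smooth oriented surface $M\subset E^3$, with nowhere-vanishing normal curvature $k_n$, whose position vector always lies in the plane spanned by $\{T,V\}$. Then $\gamma$ is an isophotic curve if and only if $k_n$ is a constant function.
   Context: For a unit speed curve $\gamma$ on an oriented surface $M\subset E^3$, the Darboux frame is $T=\gamma'$, $U$ = unit normal of $M$ along $\gamma$, $V = U\times T$, satisfying $T' = k_g V + k_n U$, $V' = -k_g T + \tau_g U$, $U' = -k_n T - \tau_g V$; here $k_g$, $k_n$, $\tau_g$ are the geodesic curvature, normal curvature and geodesic torsion. The curve $\gamma$ is an isophotic curve if there is a fixed unit vector $d$ and a constant angle $\phi$ with $\langle U, d\rangle = \cos\phi$ along $\gamma$. ''Position vector lies in the plane spanned by $\{T,V\}$'' means $\gamma(s) = \mu_1(s)T(s) + \mu_2(s)V(s)$ for differentiable functions $\mu_1,\mu_2$. *)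

(* Defs.v *)
From Stdlib Require Import Reals.
From Coquelicot Require Import Coquelicot.
Open Scope R_scope.

Record V3 := mk3 { x1 : R; x2 : R; x3 : R }.

Definition vadd (u v : V3) : V3 := mk3 (x1 u + x1 v) (x2 u + x2 v) (x3 u + x3 v).
Definition vscal (c : R) (v : V3) : V3 := mk3 (c * x1 v) (c * x2 v) (c * x3 v).
Definition dot (u v : V3) : R := x1 u * x1 v + x2 u * x2 v + x3 u * x3 v.
Definition vnorm (v : V3) : R := sqrt (dot v v).
Definition cross (u v : V3) : V3 :=
  mk3 (x2 u * x3 v - x3 u * x2 v)
      (x3 u * x1 v - x1 u * x3 v)
      (x1 u * x2 v - x2 u * x1 v).

Definition vderiv (f : R -> V3) (t : R) (f't : V3) : Prop :=
  is_derive (fun s => x1 (f s)) t (x1 f't) /\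
  is_derive (fun s => x2 (f s)) t (x2 f't) /\
  is_derive (fun s => x3 (f s)) t (x3 f't).

Definition smooth_on (a b : R) (f : R -> R) : Prop :=
  forall (n : nat) (t : R), a < t < b -> ex_derive_n f n t.

(* Darboux frame data of a unit speed curve gam : (a,b) -> E^3 lying on an
   oriented surface with unit normal U along gam:
   T = gam', |T| = 1, |U| = 1, U _|_ T, V = U x T, and
   T' = kg V + kn U,  V' = -kg T + tg U,  U' = -kn T - tg V. *)
Definition darboux_frame (a b : R) (gam T V U : R -> V3) (kg kn tg : R -> R) : Prop :=
  forall t, a < t < b ->
    vderiv gam t (T t) /\
    vnorm (T t) = 1 /\ vnorm (U t) = 1 /\ dot (U t) (T t) = 0 /\
    V t = cross (U t) (T t) /\
    vderiv T t (vadd (vscal (kg t) (V t)) (vscal (kn t) (U t))) /\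
    vderiv V t (vadd (vscal (- kg t) (T t)) (vscal (tg t) (U t))) /\
    vderiv U t (vadd (vscal (- kn t) (T t)) (vscal (- tg t) (V t))).

Definition isophotic (a b : R) (U : R -> V3) : Prop :=
  exists (d : V3) (phi : R), vnorm d = 1 /\
    forall t, a < t < b -> dot (U t) d = cos phi.

(* Main.v *)
Require Import Defs.
From Stdlib Require Import Reals Lra.
From Coquelicot Require Import Coquelicot.
Open Scope R_scope.

Lemma loc_int a b t (P : R -> Prop) : a < t < b -> (forall s, a < s < b -> P s) -> locally t P.
Proof.
  intros Ht HP. eapply filter_imp. exact HP.
  apply (open_and _ _ (open_gt a) (open_lt b) t Ht).
Qed.

Lemma dmul f g t df dg : is_derive f t df -> is_derive g t dg ->
  is_derive (fun s => f s * g s) t (df * g t + f t * dg).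
Proof. intros H1 H2. apply (is_derive_mult f g t df dg H1 H2). intros; apply Rmult_comm. Qed.

Lemma dplus f g t df dg : is_derive f t df -> is_derive g t dg ->
  is_derive (fun s => f s + g s) t (df + dg).
Proof. intros H1 H2. apply (is_derive_plus f g t df dg H1 H2). Qed.

Lemma const_int f a b : (forall t, a < t < b -> is_derive f t 0) ->
  forall x y, a < x < b -> a < y < b -> f x = f y.
Proof.
  intros Hd x y Hx Hy.
  destruct (MVT_gen f x y (fun _ => 0)) as [c [_ Hc]].
  - intros z Hz. apply Hd. unfold Rmin, Rmax in Hz. destruct (Rle_dec x y); lra.
  - intros z Hz. apply continuity_pt_filterlim. apply (ex_derive_continuous (K:=R_AbsRing) (V:=R_NormedModule)).
    exists 0. apply Hd. unfold Rmin, Rmax in Hz. destruct (Rle_dec x y); lra.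
  - lra.
Qed.

Lemma deriv_zero_of_const f a b c t l : (forall s, a < s < b -> f s = c) -> a < t < b ->
  is_derive f t l -> l = 0.
Proof.
  intros Hc Ht Hd.
  assert (H2 : is_derive f t 0).
  { apply (is_derive_ext_loc (fun _ => c)). apply (loc_int a b); [exact Ht|].
    intros s Hs; symmetry; auto. apply (is_derive_const c t). }
  apply is_derive_unique in Hd. apply is_derive_unique in H2. rewrite <- Hd, <- H2; reflexivity.
Qed.

Lemma dconst (c t : R) : is_derive (fun _ => c) t 0.
Proof. apply (is_derive_const c t). Qed.

Lemma deq (f : R -> R) (t l l' : R) : is_derive f t l -> l = l' -> is_derive f t l'.
Proof. intros H ->; exact H. Qed.

Lemma v3_ext u v : x1 u = x1 v -> x2 u = x2 v -> x3 u = x3 v -> u = v.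
Proof. destruct u, v; simpl; intros; subst; reflexivity. Qed.

Lemma dot_addl u v w : dot (vadd u v) w = dot u w + dot v w.
Proof. destruct u, v, w; unfold dot, vadd; simpl; ring. Qed.
Lemma dot_addr u v w : dot w (vadd u v) = dot w u + dot w v.
Proof. destruct u, v, w; unfold dot, vadd; simpl; ring. Qed.
Lemma dot_scall c u w : dot (vscal c u) w = c * dot u w.
Proof. destruct u, w; unfold dot, vscal; simpl; ring. Qed.
Lemma dot_scalr c u w : dot w (vscal c u) = c * dot w u.
Proof. destruct u, w; unfold dot, vscal; simpl; ring. Qed.
Lemma dot_comm u w : dot u w = dot w u.
Proof. destruct u, w; unfold dot; simpl; ring. Qed.
Lemma dot_r0 u : dot u (mk3 0 0 0) = 0.
Proof. destruct u; unfold dot; simpl; ring. Qed.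

Lemma norm1 v : vnorm v = 1 -> dot v v = 1.
Proof.
  unfold vnorm; intros H. assert (0 <= dot v v) by (destruct v as [p q r]; unfold dot; simpl; pose proof (Rle_0_sqr p); pose proof (Rle_0_sqr q); pose proof (Rle_0_sqr r); unfold Rsqr in *; lra).
  pose proof (sqrt_lem_0 _ _ H0 Rle_0_1 H). rewrite <- H1; ring.
Qed.

Lemma frame_facts T U : dot T T = 1 -> dot U U = 1 -> dot U T = 0 ->
  dot (cross U T) T = 0 /\ dot (cross U T) U = 0 /\ dot (cross U T) (cross U T) = 1.
Proof.
  intros H1 H2 H3.
  assert (L : dot (cross U T) (cross U T) = dot U U * dot T T - dot U T * dot U T)
    by (destruct U, T; unfold dot, cross; simpl; ring).
  repeat split.
  - destruct U, T; unfold dot, cross; simpl; ring.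
  - destruct U, T; unfold dot, cross; simpl; ring.
  - rewrite L, H1, H2, H3; ring.
Qed.

Lemma parseval T U d : dot T T = 1 -> dot U U = 1 -> dot U T = 0 ->
  dot d d = dot T d ^ 2 + dot U d ^ 2 + dot (cross U T) d ^ 2.
Proof.
  intros H1 H2 H3.
  assert (G : dot (cross U T) d ^ 2 =
    dot U U * (dot T T * dot d d - dot T d * dot T d)
    - dot U T * (dot U T * dot d d - dot T d * dot U d)
    + dot U d * (dot U T * dot T d - dot T T * dot U d))
    by (destruct U, T, d; unfold dot, cross; simpl; ring).
  rewrite G, H1, H2, H3. ring.
Qed.

Lemma vd_add f g t f' g' : vderiv f t f' -> vderiv g t g' ->
  vderiv (fun s => vadd (f s) (g s)) t (vadd f' g').
Proof.
  intros [A1 [A2 A3]] [B1 [B2 B3]]; unfold vadd; simpl.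
  unfold vderiv; simpl; split; [|split]; apply dplus; assumption.
Qed.

Lemma vd_scal m f t m' f' : is_derive m t m' -> vderiv f t f' ->
  vderiv (fun s => vscal (m s) (f s)) t (vadd (vscal m' (f t)) (vscal (m t) f')).
Proof.
  intros Hm [A1 [A2 A3]]; unfold vadd, vscal; simpl.
  unfold vderiv; simpl; split; [|split]; apply dmul; assumption.
Qed.

Lemma vd_const (d : V3) t : vderiv (fun _ => d) t (mk3 0 0 0).
Proof. unfold vderiv; simpl; split; [|split]; apply dconst. Qed.

Lemma vd_dot f g t f' g' : vderiv f t f' -> vderiv g t g' ->
  is_derive (fun s => dot (f s) (g s)) t (dot f' (g t) + dot (f t) g').
Proof.
  intros [A1 [A2 A3]] [B1 [B2 B3]]; unfold dot.
  eapply deq. apply dplus; [apply dplus|]; apply dmul; eassumption.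
  cbv beta; ring.
Qed.

Lemma vd_unique f g a b t f1 g1 : (forall s, a < s < b -> f s = g s) -> a < t < b ->
  vderiv f t f1 -> vderiv g t g1 -> f1 = g1.
Proof.
  intros E Ht [A1 [A2 A3]] [B1 [B2 B3]].
  assert (L : forall h : V3 -> R, locally t (fun s => h (f s) = h (g s))).
  { intros h; apply (loc_int a b); auto. intros s Hs; rewrite E; auto. }
  apply v3_ext.
  - apply (is_derive_ext_loc _ _ _ _ (L x1)) in A1.
    apply is_derive_unique in A1; apply is_derive_unique in B1; rewrite <- A1, <- B1; reflexivity.
  - apply (is_derive_ext_loc _ _ _ _ (L x2)) in A2.
    apply is_derive_unique in A2; apply is_derive_unique in B2; rewrite <- A2, <- B2; reflexivity.
  - apply (is_derive_ext_loc _ _ _ _ (L x3)) in A3.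
    apply is_derive_unique in A3; apply is_derive_unique in B3; rewrite <- A3, <- B3; reflexivity.
Qed.


Theorem corollary4p2 (a b : R) (gam T V U : R -> V3) (kg kn tg mu1 mu2 : R -> R) :
  a < b ->
  darboux_frame a b gam T V U kg kn tg ->
  smooth_on a b kg -> smooth_on a b kn -> smooth_on a b tg ->
  smooth_on a b mu1 -> smooth_on a b mu2 ->
  (forall t, a < t < b -> tg t = 0) ->
  (forall t, a < t < b -> kn t <> 0) ->
  (forall t, a < t < b -> gam t = vadd (vscal (mu1 t) (T t)) (vscal (mu2 t) (V t))) ->
  (isophotic a b U <-> exists c : R, forall t, a < t < b -> kn t = c).
Proof.
  intros Hab HF _ _ _ Hm1 Hm2 Htg Hkn Hgam.
  set (m := (a + b) / 2).
  assert (Hm : a < m < b) by (unfold m; lra).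
  assert (FF : forall t, a < t < b ->
    dot (T t) (T t) = 1 /\ dot (U t) (U t) = 1 /\ dot (U t) (T t) = 0 /\
    dot (T t) (U t) = 0 /\ dot (V t) (T t) = 0 /\ dot (T t) (V t) = 0 /\
    dot (V t) (U t) = 0 /\ dot (U t) (V t) = 0 /\ dot (V t) (V t) = 1).
  { intros t Ht. destruct (HF t Ht) as [_ [HT [HU [HUT [HV _]]]]].
    apply norm1 in HT; apply norm1 in HU.
    destruct (frame_facts _ _ HT HU HUT) as [F1 [F2 F3]]. rewrite <- HV in F1, F2, F3.
    repeat split; auto; rewrite dot_comm; auto. }
  assert (Dm1 : forall t, a < t < b -> is_derive mu1 t (Derive mu1 t)).
  { intros t Ht; apply Derive_correct. exact (Hm1 1%nat t Ht). }
  assert (Dm2 : forall t, a < t < b -> is_derive mu2 t (Derive mu2 t)).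
  { intros t Ht; apply Derive_correct. exact (Hm2 1%nat t Ht). }
  assert (KEY : forall t, a < t < b ->
    0 = mu1 t * kn t + mu2 t * tg t /\ 1 = Derive mu1 t - mu2 t * kg t /\
    0 = mu1 t * kg t + Derive mu2 t).
  { intros t Ht. destruct (HF t Ht) as [Hg [_ [_ [_ [_ [HdT [HdV _]]]]]]].
    pose proof (vd_add _ _ _ _ _ (vd_scal _ _ _ _ _ (Dm1 t Ht) HdT)
                                 (vd_scal _ _ _ _ _ (Dm2 t Ht) HdV)) as HG.
    pose proof (vd_unique _ _ a b t _ _ Hgam Ht Hg HG) as HE.
    destruct (FF t Ht) as [TT [UU [UT [TU [VT [TV [VU [UV VV]]]]]]]].
    pose proof (f_equal (fun w => dot w (U t)) HE) as E1.
    pose proof (f_equal (fun w => dot w (T t)) HE) as E2.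
    pose proof (f_equal (fun w => dot w (V t)) HE) as E3.
    cbv beta in E1, E2, E3.
    repeat (rewrite dot_addl in E1 || rewrite dot_scall in E1). repeat (rewrite dot_addl in E2 || rewrite dot_scall in E2). repeat (rewrite dot_addl in E3 || rewrite dot_scall in E3).
    rewrite ?TT, ?UU, ?UT, ?TU, ?VT, ?TV, ?VU, ?UV, ?VV in E1.
    rewrite ?TT, ?UU, ?UT, ?TU, ?VT, ?TV, ?VU, ?UV, ?VV in E2.
    rewrite ?TT, ?UU, ?UT, ?TU, ?VT, ?TV, ?VU, ?UV, ?VV in E3.
    repeat split; lra. }
  assert (Hmu1 : forall t, a < t < b -> mu1 t = 0).
  { intros t Ht. destruct (KEY t Ht) as [K _]. rewrite Htg in K by exact Ht.
    assert (mu1 t * kn t = 0) by lra.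
    destruct (Rmult_integral _ _ H); [auto | exfalso; apply (Hkn t Ht); auto]. }
  assert (Hdm1 : forall t, a < t < b -> Derive mu1 t = 0).
  { intros t Ht. exact (deriv_zero_of_const mu1 a b 0 t _ Hmu1 Ht (Dm1 t Ht)). }
  assert (Hmu2 : forall t, a < t < b -> mu2 t = mu2 m).
  { intros t Ht. apply (const_int mu2 a b); auto.
    intros s Hs. destruct (KEY s Hs) as [_ [_ K]]. rewrite Hmu1 in K by exact Hs.
    eapply deq. apply Dm2; auto. lra. }
  assert (Hmk : forall t, a < t < b -> mu2 t * kg t = -1).
  { intros t Ht. destruct (KEY t Ht) as [_ [K _]]. rewrite Hdm1 in K by exact Ht. lra. }
  set (k0 := kg m).
  assert (Hk0 : k0 <> 0).
  { intro H0. pose proof (Hmk m Hm). unfold k0 in H0. rewrite H0 in H. lra. }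
  assert (Hkg : forall t, a < t < b -> kg t = k0).
  { intros t Ht. pose proof (Hmk t Ht). pose proof (Hmk m Hm). rewrite (Hmu2 t Ht) in H.
    unfold k0. assert (mu2 m <> 0) by (intro Z; rewrite Z in H0; lra).
    apply (Rmult_eq_reg_l (mu2 m)); auto; lra. }
  split.
  - intros [d [phi [Hd Hud]]].
    assert (HTd : forall t, a < t < b -> dot (T t) d = 0).
    { intros t Ht. destruct (HF t Ht) as [_ [_ [_ [_ [_ [_ [_ HdU]]]]]]].
      pose proof (vd_dot _ _ _ _ _ HdU (vd_const d t)) as D.
      pose proof (deriv_zero_of_const _ a b _ t _ Hud Ht D) as Z.
      rewrite dot_r0, dot_addl, !dot_scall, Htg in Z by exact Ht.
      assert (kn t * dot (T t) d = 0) by lra.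
      destruct (Rmult_integral _ _ H); [exfalso; apply (Hkn t Ht); auto | auto]. }
    assert (HTd2 : forall t, a < t < b -> kg t * dot (V t) d + kn t * cos phi = 0).
    { intros t Ht. destruct (HF t Ht) as [_ [_ [_ [_ [_ [HdT _]]]]]].
      pose proof (vd_dot _ _ _ _ _ HdT (vd_const d t)) as D.
      pose proof (deriv_zero_of_const _ a b _ t _ HTd Ht D) as Z.
      rewrite dot_r0, dot_addl, !dot_scall, Hud in Z by exact Ht. lra. }
    assert (HVd : forall t, a < t < b -> dot (V t) d = dot (V m) d).
    { intros t Ht. apply (const_int (fun s => dot (V s) d) a b); auto.
      intros s Hs. destruct (HF s Hs) as [_ [_ [_ [_ [_ [_ [HdV _]]]]]]].
      eapply deq. apply (vd_dot _ _ _ _ _ HdV (vd_const d s)).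
      rewrite dot_r0, dot_addl, !dot_scall, HTd by exact Hs.
      rewrite Htg by exact Hs. ring. }
    set (v0 := dot (V m) d).
    assert (P : 1 = cos phi ^ 2 + v0 ^ 2).
    { destruct (HF m Hm) as [_ [HT [HU [HUT [HV _]]]]].
      apply norm1 in HT; apply norm1 in HU. apply norm1 in Hd.
      pose proof (parseval _ _ d HT HU HUT) as Pa. rewrite <- HV in Pa.
      rewrite Hd, HTd, Hud in Pa by exact Hm. unfold v0. lra. }
    destruct (Req_dec (cos phi) 0) as [C0 | C0].
    + exfalso. pose proof (HTd2 m Hm). rewrite C0 in H. fold k0 in H.
      fold v0 in H.
      assert (k0 * v0 = 0) by lra.
      destruct (Rmult_integral _ _ H0); [auto | ]. rewrite C0, H1 in P. lra.
    + exists (- k0 * v0 / cos phi). intros t Ht.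
      pose proof (HTd2 t Ht). rewrite Hkg, HVd in H by exact Ht. fold v0 in H.
      field_simplify; auto. apply (Rmult_eq_reg_r (cos phi)); auto.
      field_simplify; auto. lra.
  - intros [c Hc].
    assert (Hpos : 0 < c * c + k0 * k0).
    { assert (0 < k0 * k0) by (apply Rsqr_pos_lt; auto). nra. }
    set (n := sqrt (c * c + k0 * k0)).
    assert (Hn : 0 < n) by (apply sqrt_lt_R0; auto).
    assert (Hnn : n * n = c * c + k0 * k0) by (apply sqrt_sqrt; lra).
    set (D := fun s => vadd (vscal (c / n) (V s)) (vscal (- k0 / n) (U s))).
    assert (HD : forall t, a < t < b -> vderiv D t (mk3 0 0 0)).
    { intros t Ht. destruct (HF t Ht) as [_ [_ [_ [_ [_ [_ [HdV HdU]]]]]]].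
      pose proof (vd_add _ _ _ _ _ (vd_scal _ _ _ _ _ (dconst (c / n) t) HdV)
                                   (vd_scal _ _ _ _ _ (dconst (- k0 / n) t) HdU)) as H.
      replace (mk3 0 0 0) with
        (vadd (vadd (vscal 0 (V t)) (vscal (c / n) (vadd (vscal (- kg t) (T t)) (vscal (tg t) (U t)))))
              (vadd (vscal 0 (U t)) (vscal (- k0 / n) (vadd (vscal (- kn t) (T t)) (vscal (- tg t) (V t)))))).
      exact H.
      rewrite Hkg, Htg, Hc by exact Ht.
      apply v3_ext; unfold vadd, vscal; simpl; field; lra. }
    assert (HDc : forall t, a < t < b -> D t = D m).
    { intros t Ht. apply v3_ext.
      - apply (const_int (fun s => x1 (D s)) a b); auto. intros s Hs; apply (HD s Hs).
      - apply (const_int (fun s => x2 (D s)) a b); auto. intros s Hs; apply (HD s Hs).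
      - apply (const_int (fun s => x3 (D s)) a b); auto. intros s Hs; apply (HD s Hs). }
    assert (Hb : -1 <= - k0 / n <= 1).
    { assert (Hq : - k0 / n * n = - k0) by (field; lra).
      assert (k0 <= n) by nra. assert (- n <= k0) by nra. split; nra. }
    exists (D m), (acos (- k0 / n)). split.
    + destruct (FF m Hm) as [TT [UU [UT [TU [VT [TV [VU [UV VV]]]]]]]].
      unfold vnorm. replace (dot (D m) (D m)) with 1. apply sqrt_1.
      unfold D. rewrite !dot_addl, !dot_addr, !dot_scall, !dot_scalr, UU, VU, UV, VV.
      replace (c / n * (c / n * 1) + c / n * (- k0 / n * 0) + (- k0 / n * (c / n * 0) + - k0 / n * (- k0 / n * 1))) with ((c * c + k0 * k0) / (n * n)) by (field; lra). rewrite Hnn. field. lra.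
    + intros t Ht. rewrite cos_acos by exact Hb. rewrite <- (HDc t Ht).
      destruct (FF t Ht) as [TT [UU [UT [TU [VT [TV [VU [UV VV]]]]]]]].
      unfold D. rewrite !dot_addr, !dot_scalr, UU, UV. field. lra.
Qed.
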